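(* Let $A\in\mathbb{R}^{n\times n}$, $C\in\mathbb{R}^{p\times n}$ and $K\in\mathbb{N}$, and let $$\mathcal{O}_K=\begin{bmatrix} C^\top & (CA)^\top & \cdots & (CA^{K-1})^\top\end{bmatrix}^\top\in\mathbb{R}^{pK\times n}.$$ Assume $\mathcal{O}_K$ has full column rank, set $\mathcal{W}_o:=\mathcal{O}_K^\top\mathcal{O}_K$, let $\Sigma_v\in\mathbb{R}^{n\times n}$ with $\Sigma_v\succ 0$, and define $M:=\mathcal{O}_K\mathcal{W}_o^{-1}\mathcal{O}_K^\top$ and $N:=\Sigma_v^{-1/2}\mathcal{W}_o^{-1}\mathcal{O}_K^\top$. Consider the optimization problem $$\max_{R\in\mathbb{R}^{pK\times pK},\ \beta\in\mathbb{R}^+}\ \beta\quad\text{subject to}\quad N^\top N+R-MRM\succeq \beta I_{pK}.$$ The optimal value of the objective function is $\beta_{\mathrm{opt}}=\lambda_{\min}(\Sigma_v^{-1}\mathcal{W}_o^{-1})$.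
   Context: $\Sigma_v^{-1/2}$ denotes the symmetric positive definite square root of $\Sigma_v^{-1}$. $\mathbb{R}^+$ denotes the positive reals. $Y\succeq \beta I$ means $Y-\beta I$ is symmetric positive semidefinite. $\lambda_{\min}(\cdot)$ denotes the smallest eigenvalue (the eigenvalues of $\Sigma_v^{-1}\mathcal{W}_o^{-1}$ are real and positive). *)

(* Defs.v *)
From HB Require Import structures.
From mathcomp Require Import all_boot all_order all_algebra.
From mathcomp Require Import reals.
Set Implicit Arguments. Unset Strict Implicit. Unset Printing Implicit Defensive.
Import Order.TTheory GRing.Theory Num.Theory.
Local Open Scope ring_scope.

Definition psd (R : realFieldType) (m : nat) (Y : 'M[R]_m) : Prop :=
  Y^T = Y /\ forall v : 'rV[R]_m, 0 <= (v *m Y *m v^T) 0 0.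

Definition pd (R : realFieldType) (m : nat) (Y : 'M[R]_m) : Prop :=
  Y^T = Y /\ forall v : 'rV[R]_m, v != 0 -> 0 < (v *m Y *m v^T) 0 0.

(* extended observability matrix O_K = [C; CA; ...; CA^(K-1)] in R^(pK x n);
   row k*p + r (k < K, r < p) is row r of C A^k *)
Definition obsv (R : realFieldType) (n p K : nat) (A : 'M[R]_n) (C : 'M[R]_(p, n))
  : 'M[R]_(K * p, n) :=
  \matrix_(i < K * p, j < n) (mxvec (\matrix_(k < K, r < p) (C *m A ^+ k) r j)) 0 i.

Definition is_lambda_min (R : realFieldType) (m : nat) (X : 'M[R]_m) (l : R) : Prop :=
  eigenvalue X l /\ forall l', eigenvalue X l' -> l <= l'.

Definition feasible (R : realFieldType) (q n : nat) (M : 'M[R]_q) (N : 'M[R]_(n, q))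
  (Rm : 'M[R]_q) (beta : R) : Prop :=
  0 < beta /\ psd (N^T *m N + Rm - M *m Rm *m M - beta%:M).

(* Main.v *)
Require Import Defs.
From HB Require Import structures.
From mathcomp Require Import all_boot all_order all_algebra.
From mathcomp Require Import reals.
From mathcomp Require Import all_classical all_reals all_analysis.
From mathcomp Require Import ring lra.
Import Order.TTheory GRing.Theory Num.Theory.
Import numFieldNormedType.Exports.
Set Implicit Arguments. Unset Strict Implicit. Unset Printing Implicit Defensive.
Local Open Scope ring_scope.
Local Open Scope classical_set_scope.
Definition qf (R : pzRingType) n (X : 'M[R]_n) (x : 'rV[R]_n) : R := (x *m X *m x^T) 0 0.

Lemma qfE (R : comPzRingType) n (X : 'M[R]_n) x :
  qf X x = \sum_j \sum_i (x 0 i * X i j * x 0 j).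
Proof.
rewrite /qf mxE; apply: eq_bigr => j _; rewrite !mxE big_distrl /=.
by [].
Qed.

Lemma cont_sum (R : realType) (T : topologicalType) (I : Type) (r : seq I)
  (F : I -> T -> R) : (forall i, continuous (F i)) ->
  continuous (fun x => \sum_(i <- r) F i x).
Proof.
move=> hF; elim: r => [|a r IH].
  under eq_fun do rewrite big_nil; exact: cst_continuous.
under eq_fun do rewrite big_cons.
by move=> x; apply: continuousD; [apply: hF | apply: IH].
Qed.

Lemma qf_cont (R : realType) n (X : 'M[R]_n) : continuous (qf X).
Proof.
have -> : qf X = (fun x => \sum_j \sum_i (x 0 i * X i j * x 0 j)).
  by apply: funext => x; rewrite qfE.
apply: cont_sum => j; apply: cont_sum => i.
move=> x.
apply: (@continuousM R _ (fun y : 'rV[R]_n => y 0 i * X i j) (fun y => y 0 j)); last exact: coord_continuous.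
apply: (@continuousM R _ (fun y : 'rV[R]_n => y 0 i) (fun y => X i j)); last exact: cst_continuous.
exact: coord_continuous.
Qed.

Lemma qfZ (R : comPzRingType) n (X : 'M[R]_n) a x : qf X (a *: x) = a ^+ 2 * qf X x.
Proof. by rewrite /qf -scalemxAl linearZ /= -scalemxAl -scalemxAr scalerA mxE expr2. Qed.

Lemma rayleigh (R : realType) n (hn : (0 < n)%N) (P W : 'M[R]_n) :
  (forall x, x != 0 -> 0 < qf W x) ->
  exists2 c, c != 0 & forall x, x != 0 -> qf P c / qf W c <= qf P x / qf W x.
Proof.
move=> hW.
pose A := [set x : 'rV[R]_n | `|x| = 1].
have A0 : forall x, A x -> x != 0.
  by move=> x; rewrite /A /= => h; apply/eqP => x0; move: h; rewrite x0 normr0 => /eqP; rewrite eq_sym oner_eq0.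
have neA : A !=set0.
  pose e : 'rV[R]_n := const_mx 1.
  have e0 : e != 0.
    apply/eqP => /matrixP /(_ 0 (Ordinal hn)); rewrite !mxE => /eqP; by rewrite oner_eq0.
  exists (`|e|^-1 *: e); rewrite /A /=; apply: normrZV.
  by rewrite unitfE normr_eq0.
have cA : compact A.
  apply: bounded_closed_compact.
    exists 1; split => // M hM x Ax.
    by rewrite /A /= in Ax; rewrite /= Ax ltW.
  have -> : A = Num.norm @^-1` [set 1 : R] by [].
  by move: (@norm_continuous R 'rV[R]_n) => /continuous_closedP; apply; exact: closed_eq.
have cg : {within A, continuous (fun x => qf P x / qf W x)}.
  apply: continuous_in_subspaceT => x /[1!inE] Ax.
  apply: continuousM; first exact: qf_cont.
  apply: continuousV; first by rewrite gt_eqF // hW // A0.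
  exact: qf_cont.
have [c /[1!inE] Ac hc] := EVT_min_rV neA cA cg.
exists c; first exact: A0.
move=> x x0.
have nx : `|x| \is a GRing.unit by rewrite unitfE normr_eq0.
have := hc (`|x|^-1 *: x); rewrite inE /A /= normrZV // => /(_ erefl).
rewrite !qfZ; have hx : `|x|^-1 ^+ 2 != 0 :> R by rewrite expf_eq0 /= invr_eq0 normr_eq0 x0.
by rewrite invfM mulrACA mulfV // mul1r.
Qed.

Lemma qfD (R : comPzRingType) n (X Y : 'M[R]_n) x : qf (X + Y) x = qf X x + qf Y x.
Proof. by rewrite /qf mulmxDr mulmxDl mxE. Qed.

Lemma qfB (R : comPzRingType) n (X Y : 'M[R]_n) x : qf (X - Y) x = qf X x - qf Y x.
Proof. by rewrite [in RHS](_ : X = (X - Y) + Y) ?qfD ?addrK // subrK. Qed.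

Lemma qfZm (R : comPzRingType) n (X : 'M[R]_n) a x : qf (a *: X) x = a * qf X x.
Proof. by rewrite /qf -scalemxAr -scalemxAl mxE. Qed.

Lemma qf_scal (R : comPzRingType) n (a : R) (x : 'rV[R]_n) :
  qf (a%:M) x = a * (x *m x^T) 0 0.
Proof. by rewrite /qf mul_mx_scalar -scalemxAl mxE. Qed.

Lemma qf0 (R : comPzRingType) n (X : 'M[R]_n) : qf X 0 = 0.
Proof. by rewrite /qf !mul0mx mxE. Qed.

Lemma self_pos (R : realFieldType) m (u : 'rV[R]_m) : u != 0 -> 0 < (u *m u^T) 0 0.
Proof.
move=> u0; rewrite mxE lt_def; apply/andP; split; last first.
  by apply: sumr_ge0 => i _; rewrite mxE -expr2 sqr_ge0.
rewrite psumr_eq0 => [|i _]; last by rewrite mxE -expr2 sqr_ge0.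
apply: contra u0 => /allP h; apply/eqP/matrixP => a b; rewrite (ord1 a) !mxE.
by have := h b (mem_index_enum b); rewrite /= mxE -expr2 sqrf_eq0 => /eqP.
Qed.

Lemma self_eq0 (R : realFieldType) m (u : 'rV[R]_m) : (u *m u^T) 0 0 = 0 -> u = 0.
Proof.
move=> h; apply/eqP; apply: contraT => /self_pos; by rewrite h ltxx.
Qed.

Lemma e_add (R : comPzRingType) (A B : 'M[R]_1) : (A + B) 0 0 = A 0 0 + B 0 0.
Proof. by rewrite mxE. Qed.
Lemma e_scale (R : comPzRingType) a (A : 'M[R]_1) : (a *: A) 0 0 = a * A 0 0.
Proof. by rewrite mxE. Qed.

Lemma qf_expand (R : comPzRingType) n (X : 'M[R]_n) (u v : 'rV[R]_n) t :
  X^T = X -> qf X (u + t *: v) = qf X u + 2 * t * (u *m X *m v^T) 0 0 + t ^+ 2 * qf X v.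
Proof.
move=> hX.
have hs : (v *m X *m u^T) 0 0 = (u *m X *m v^T) 0 0.
  have -> : (v *m X *m u^T) 0 0 = ((v *m X *m u^T)^T) 0 0 by rewrite [in RHS]mxE.
  by rewrite !trmx_mul trmxK hX mulmxA.
rewrite /qf linearD linearZ /= !mulmxDl !mulmxDr -!scalemxAl -!scalemxAr.
rewrite !e_add !e_scale hs; ring.
Qed.

Lemma main_gen (R : realType) (n q : nat) (hn : (0 < n)%N) (O : 'M[R]_(q, n))
  (hO : forall x : 'rV[R]_n, x != 0 -> x *m O^T != 0)
  (S : 'M[R]_n) (hS : pd S) (Sv : 'M[R]_n) (hSS : S *m S = invmx Sv) :
  let W := O^T *m O in
  let M := O *m invmx W *m O^T in
  let N := S *m invmx W *m O^T in
  exists beta_opt : R,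
    is_lambda_min (invmx Sv *m invmx W) beta_opt /\
    (exists Rm : 'M[R]_q, feasible M N Rm beta_opt) /\
    (forall (Rm : 'M[R]_q) (beta : R), feasible M N Rm beta -> beta <= beta_opt).
Proof.
move=> W M N.
have hWdef : O^T *m O = W by [].
have hMdef : M = O *m invmx W *m O^T by [].
have hNdef : N = S *m invmx W *m O^T by [].
clearbody M N W.
have hWt : W^T = W by rewrite -hWdef trmx_mul trmxK.
have hWpos : forall x, x != 0 -> 0 < qf W x.
  move=> x x0; have -> : qf W x = ((x *m O^T) *m (x *m O^T)^T) 0 0.
    by rewrite /qf trmx_mul trmxK -hWdef !mulmxA.
  exact: self_pos (hO x x0).
have Wunit : W \in unitmx.
  rewrite unitmxE unitfE; apply/negP => /det0P [v v0 vW].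
  by have := hWpos v v0; rewrite /qf vW mul0mx mxE ltxx.
have hWit : (invmx W)^T = invmx W by rewrite trmx_inv hWt.
have hSt : S^T = S := hS.1.
pose P := S *m S.
have hPt : P^T = P by rewrite /P trmx_mul hSt.
have hPpos : forall x, x != 0 -> 0 < qf P x.
  move=> x x0.
  have -> : qf P x = ((x *m S) *m (x *m S)^T) 0 0 by rewrite /qf /P trmx_mul hSt !mulmxA.
  apply: self_pos; apply/eqP => xS0.
  by have := hS.2 x x0; rewrite xS0 mul0mx mxE ltxx.
have [c c0 hc] := @rayleigh _ _ hn P W hWpos.
set lam := qf P c / qf W c.
have hWc := hWpos c c0.
have lam_pos : 0 < lam by rewrite divr_gt0 // hPpos.
have hPc : qf P c = lam * qf W c by rewrite /lam divfK // gt_eqF.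
have Ray : forall x, lam * qf W x <= qf P x.
  move=> x; have [->|x0] := eqVneq x 0; first by rewrite !qf0 mulr0.
  by have := hc x x0; rewrite -/lam ler_pdivlMr // hWpos.
pose Q := P - lam *: W.
have hQt : Q^T = Q by rewrite /Q linearB linearZ /= hPt hWt.
have hQ : forall x, 0 <= qf Q x by move=> x; rewrite /Q qfB qfZm subr_ge0 Ray.
have hQc : qf Q c = 0 by rewrite /Q qfB qfZm hPc subrr.
have hcQ : c *m Q = 0.
  pose y := c *m Q.
  pose a := (c *m Q *m y^T) 0 0. pose b := qf Q y.
  have hb : 0 <= b := hQ y.
  have hb1 : 0 < b + 1 by lra.
  pose t := - a / (b + 1).
  have := hQ (c + t *: y); rewrite qf_expand // hQc add0r -/a -/b => h.
  have e : a ^+ 2 * (b + 2) = - ((b + 1) ^+ 2 * (2 * t * a + t ^+ 2 * b)).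
    by rewrite /t; field; rewrite gt_eqF.
  have h2 : a ^+ 2 * (b + 2) <= 0.
    by rewrite e oppr_le0 mulr_ge0 // sqr_ge0.
  have ha : a ^+ 2 == 0 by rewrite eq_le sqr_ge0 andbT; nra.
  apply: self_eq0; move: ha; rewrite sqrf_eq0 => /eqP; exact.
have hcP : c *m P = lam *: (c *m W).
  by move/eqP: hcQ; rewrite /Q mulmxBr subr_eq0 -scalemxAr => /eqP.
exists lam; split; [split|split].
- apply/eigenvalueP; exists c => //.
  by rewrite -hSS -/P mulmxA hcP -scalemxAl mulmxK.
- move=> l /eigenvalueP [u hu u0]; rewrite -hSS -/P in hu.
  have huP : u *m P = l *: (u *m W).
    have h1 : u *m (P *m invmx W) *m W = (l *: u) *m W by rewrite hu.
    by rewrite mulmxA mulmxKV // -scalemxAl in h1.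
  have e : qf P u = l * qf W u by rewrite /qf huP -scalemxAl mxE.
  by rewrite -(ler_pM2r (hWpos u u0)) -e Ray.
- have hMM : M *m M = M.
    by rewrite hMdef !mulmxA -(mulmxA (O *m invmx W) O^T O) hWdef mulmxKV.
  have hMt : M^T = M by rewrite hMdef !trmx_mul trmxK hWit mulmxA.
  have hNN : forall v, qf (N^T *m N) v = qf P (v *m O *m invmx W).
    by move=> v; rewrite /qf hNdef /P !trmx_mul trmxK hWit hSt !mulmxA.
  have hMq : forall v, qf M v = qf W (v *m O *m invmx W).
    by move=> v; rewrite /qf mulmxKV // !trmx_mul hWit hMdef !mulmxA.
  exists (lam *: (1%:M - M)); split; first exact: lam_pos.
  have eqY : N^T *m N + lam *: (1%:M - M) - M *m (lam *: (1%:M - M)) *m M - lam%:M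
      = N^T *m N - lam *: M.
    rewrite -scalemxAr -scalemxAl mulmxBr mulmx1 hMM mulmxBl hMM subrr scaler0 subr0.
    by rewrite scalerBr scalemx1 addrA addrAC addrK.
  rewrite eqY; split.
    by rewrite linearB linearZ /= hMt trmx_mul trmxK.
  move=> v; change (0 <= qf (N^T *m N - lam *: M) v).
  by rewrite qfB qfZm hNN hMq subr_ge0 Ray.
- move=> Rm beta [hb [_ hY]].
  pose v := c *m O^T.
  have hMt : M^T = M by rewrite hMdef !trmx_mul trmxK hWit mulmxA.
  have hvM : v *m M = v by rewrite /v hMdef !mulmxA -(mulmxA c O^T O) hWdef mulmxK.
  have hMv : M *m v^T = v^T by rewrite -hMt -trmx_mul hvM.
  have hNN : forall v, qf (N^T *m N) v = qf P (v *m O *m invmx W).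
    by move=> w; rewrite /qf hNdef /P !trmx_mul trmxK hWit hSt !mulmxA.
  have hvc : v *m O *m invmx W = c by rewrite /v -(mulmxA c) hWdef mulmxK.
  have hvv : (v *m v^T) 0 0 = qf W c by rewrite /qf -hWdef /v trmx_mul trmxK !mulmxA.
  have hMRM : qf (M *m Rm *m M) v = qf Rm v by rewrite /qf !mulmxA hvM -mulmxA hMv.
  have := hY v; change (0 <= qf (N^T *m N + Rm - M *m Rm *m M - beta%:M) v -> beta <= lam).
  rewrite !qfB qfD qf_scal hMRM hNN hvc hvv addrK hPc -mulrBl pmulr_lge0 // subr_ge0.
  done.
Qed.

Theorem theorem7 (R : realType) (n p K : nat) (hn : (0 < n)%N)
  (A : 'M[R]_n) (C : 'M[R]_(p, n))
  (hrank : \rank (obsv K A C) = n)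
  (Sv : 'M[R]_n) (hSv : pd Sv)
  (S : 'M[R]_n) (hS : pd S) (hSS : S *m S = invmx Sv) :
  let O := obsv K A C in
  let W := O^T *m O in
  let M := O *m invmx W *m O^T in
  let N := S *m invmx W *m O^T in
  exists beta_opt : R,
    is_lambda_min (invmx Sv *m invmx W) beta_opt /\
    (exists Rm : 'M[R]_(K * p), feasible M N Rm beta_opt) /\
    (forall (Rm : 'M[R]_(K * p)) (beta : R), feasible M N Rm beta -> beta <= beta_opt).
Proof.
move=> O.
apply: main_gen => //.
have hfree : row_free O^T by rewrite /row_free mxrank_tr hrank.
move=> x x0; apply: contra x0 => /eqP h; apply/eqP.
by apply: (row_free_injr hfree); rewrite /= h mul0mx.
Qed.
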